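(* Let $C_{\log}>0$, let $\gamma,\gamma'\in\mathbb{R}^d_{>0}$ with $\gamma'_i\ge\gamma_i$ for all $i\in[d]$, let $L,L'\in\mathbb{R}^d_{>0}$, and let $\psi:\mathbb{R}_{>0}\to\mathbb{R}$ be a twice differentiable convex function such that $\frac{\psi''(x)}{4}\le\psi''(z)\le4\psi''(x)$ for all $x>0$ and $z\in[x/2,2x]$. Define $\phi(p)=\sum_{i\in[d]}\gamma_i\psi(p_i)$, $\phi'(p)=\sum_{i\in[d]}\gamma'_i\psi(p_i)$, $\phi_L(p)=-C_{\log}\sum_{i\in[d]}\log p_i$, $F(p)=\langle p,L\rangle+\phi(p)+\phi_L(p)$ and $F'(p)=\langle p,L'\rangle+\phi'(p)+\phi_L(p)$. Let $\Omega\subseteq\mathbb{R}^d_{>0}$ be convex, and let $x=\arg\min_{p\in\Omega}F(p)$, $y=\arg\min_{p\in\Omega}F'(p)$. If $$C_{\log}\ge\max\Big\{9,\ 32\sum_{i\in[d]}(L'_i-L_i)^2x_i^2,\ 32\sum_{i\in[d]}(\gamma'_i-\gamma_i)^2\psi'(x_i)^2x_i^2\Big\},$$ then $\frac12x_i\le y_i\le2x_i$ for all $i\in[d]$. *)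

(* Defs.v *)
From HB Require Import structures.
From mathcomp Require Import all_boot all_order all_algebra.
From mathcomp Require Import all_classical all_reals all_analysis.
Set Implicit Arguments. Unset Strict Implicit. Unset Printing Implicit Defensive.
Import Order.TTheory GRing.Theory Num.Theory.
Local Open Scope ring_scope.

Definition inner (R : realType) (d : nat) (p L : 'I_d -> R) : R :=
  \sum_(i < d) p i * L i.

Definition phi_reg (R : realType) (d : nat) (gam : 'I_d -> R) (psi : R -> R)
  (p : 'I_d -> R) : R := \sum_(i < d) gam i * psi (p i).

Definition phi_log (R : realType) (d : nat) (Clog : R) (p : 'I_d -> R) : R :=
  - (Clog * \sum_(i < d) ln (p i)).

Definition Fobj (R : realType) (d : nat) (Clog : R) (gam L : 'I_d -> R)
  (psi : R -> R) (p : 'I_d -> R) : R :=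
  inner p L + phi_reg gam psi p + phi_log Clog p.

Definition is_argmin (R : realType) (d : nat) (G : ('I_d -> R) -> R)
  (Omega : set ('I_d -> R)) (x : 'I_d -> R) : Prop :=
  Omega x /\ forall p, Omega p -> G x <= G p.

Definition convex_set_d (R : realType) (d : nat) (Omega : set ('I_d -> R)) : Prop :=
  forall p q (t : R), Omega p -> Omega q -> 0 <= t <= 1 ->
    Omega (fun i => t * p i + (1 - t) * q i).

Definition convex_pos (R : realType) (psi : R -> R) : Prop :=
  forall a b (t : R), 0 < a -> 0 < b -> 0 <= t <= 1 ->
    psi (t * a + (1 - t) * b) <= t * psi a + (1 - t) * psi b.

Definition twice_diff_pos (R : realType) (psi : R -> R) : Prop :=
  forall z : R, 0 < z -> derivable psi z 1 /\ derivable (derive1 psi) z 1.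

(* Main.v *)
Require Import Defs.
From HB Require Import structures.
From mathcomp Require Import all_boot all_order all_algebra.
From mathcomp Require Import all_classical all_reals all_analysis.
Import Order.TTheory GRing.Theory Num.Theory.
Local Open Scope ring_scope.
From mathcomp Require Import ring lra.
Import numFieldNormedType.Exports.
Section H.
Local Open Scope classical_set_scope.
Variable R : realType.
Implicit Types (f g : R -> R) (x a b k : R).

Lemma derD f g x a b : is_derive x 1 f a -> is_derive x 1 g b ->
  is_derive x 1 (fun t => f t + g t) (a + b).
Proof. move=> H1 H2; exact: (is_deriveD H1 H2). Qed.

Lemma derB f g x a b : is_derive x 1 f a -> is_derive x 1 g b ->
  is_derive x 1 (fun t => f t - g t) (a - b).
Proof. move=> H1 H2; exact: (is_deriveB H1 H2). Qed.

Lemma derMl f x a k : is_derive x 1 f a -> is_derive x 1 (fun t => k * f t) (k * a).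
Proof. move=> H1; exact: (is_deriveZ k H1). Qed.

Lemma derMr f x a k : is_derive x 1 f a -> is_derive x 1 (fun t => f t * k) (a * k).
Proof.
move=> H1; have H := @derMl f x a k H1.
have -> : (fun t => f t * k) = (fun t => k * f t) by apply/funext => t; rewrite mulrC.
by rewrite mulrC.
Qed.

Lemma derC x k : is_derive x 1 (fun _ : R => k) 0.
Proof. exact: is_derive_cst. Qed.

Lemma derlin a p : is_derive (0:R) 1 (fun t : R => t * a + p) a.
Proof.
have H := is_deriveD (is_deriveZ a (@is_derive_id _ _ (0:R) 1)) (@is_derive_cst _ _ _ p (0:R) 1).
have -> : (fun t : R => t * a + p) = (a \*: id) + cst p.
  by apply/funext => t /=; rewrite mulrC.
apply: is_derive_eq H _.
by rewrite addr0 scaler1.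
Qed.

Lemma dercomp f a p : derivable f p 1 ->
  is_derive (0:R) 1 (fun t => f (t * a + p)) (derive1 f p * a).
Proof.
move=> df.
have H1 : is_derive ((fun t : R => t * a + p) 0) 1 f (derive1 f p).
  rewrite /= mul0r add0r derive1E; exact: derivableP.
have H := @is_derive1_comp R f (fun t => t * a + p) 0 _ _ H1 (derlin a p); exact H.
Qed.

Lemma derln a p : 0 < p ->
  is_derive (0:R) 1 (fun t => ln (t * a + p)) (p^-1 * a).
Proof.
move=> p0.
have H1 : is_derive ((fun t : R => t * a + p) 0) 1 (@ln R) p^-1.
  rewrite /= mul0r add0r; exact: is_derive1_ln.
have H := @is_derive1_comp R (@ln R) (fun t => t * a + p) 0 _ _ H1 (derlin a p); exact H.
Qed.

Lemma right_le (f : R -> R) (K : R) :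
  derivable f 0 1 -> (forall t, 0 < t -> t <= 1 -> f 0 + t * K <= f t) ->
  K <= 'D_1 f 0.
Proof.
move=> df H.
have cv : (fun h : R => h^-1 *: (f (h *: 1 + 0) - f 0)) @ 0^'+ --> 'D_1 f 0.
  apply: cvg_trans df.
  move=> P /= [e e0 He]; exists e => // y /= ey y0; apply: He => //.
  by rewrite gt_eqF.
apply: (cvgr_to_ge cv).
near=> h.
have h0 : 0 < h by near: h; exact: nbhs_right_gt.
have h1 : h <= 1 by near: h; exact: nbhs_right_le.
rewrite /= scaler1 addr0 [_ *: _]mulrC ler_pdivlMr //.
by rewrite lerBrDl mulrC; apply: H.
Unshelve. all: by end_near.
Qed.

Lemma right_ge (f : R -> R) (K : R) :
  derivable f 0 1 -> (forall t, 0 < t -> t <= 1 -> f t <= f 0 + t * K) ->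
  'D_1 f 0 <= K.
Proof.
move=> df H.
have cv : (fun h : R => h^-1 *: (f (h *: 1 + 0) - f 0)) @ 0^'+ --> 'D_1 f 0.
  apply: cvg_trans df.
  move=> P /= [e e0 He]; exists e => // y /= ey y0; apply: He => //.
  by rewrite gt_eqF.
apply: (cvgr_to_le cv).
near=> h.
have h0 : 0 < h by near: h; exact: nbhs_right_gt.
have h1 : h <= 1 by near: h; exact: nbhs_right_le.
rewrite /= scaler1 addr0 [_ *: _]mulrC ler_pdivrMr //.
by rewrite lerBlDl mulrC; apply: H.
Unshelve. all: by end_near.
Qed.

End H.
Lemma tangent (R : realType) (psi : R -> R) a b :
  convex_pos psi -> derivable psi a 1 -> 0 < a -> 0 < b ->
  derive1 psi a * (b - a) <= psi b - psi a.
Proof.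
move=> cv da a0 b0.
have D := @dercomp R psi (b - a) a da.
rewrite -(@derive_val _ _ _ _ _ _ _ D).
apply: right_ge; first exact: ex_derive.
move=> t t0 t1.
rewrite mul0r add0r.
have -> : t * (b - a) + a = t * b + (1 - t) * a by ring.
have := cv b a t b0 a0; rewrite (ltW t0) t1 => /(_ isT) H.
apply: (le_trans H); rewrite le_eqVlt; apply/orP; left; apply/eqP; ring.
Qed.

Lemma foc (R : realType) (d : nat) (c : R) (gam L : 'I_d -> R) (psi : R -> R)
  (Omega : set ('I_d -> R)) (p q : 'I_d -> R) :
  (forall z, 0 < z -> derivable psi z 1) ->
  (forall p, Omega p -> forall i, 0 < p i) -> convex_set_d Omega ->
  is_argmin (Fobj c gam L psi) Omega p -> Omega q ->
  0 <= \sum_(i < d) (L i + gam i * derive1 psi (p i) - c / p i) * (q i - p i).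
Proof.
move=> dpsi pos cvx [Op pmin] Oq.
pose h := fun (i : 'I_d) (t : R) => (t * (q i - p i) + p i) * L i
   + gam i * psi (t * (q i - p i) + p i) - c * ln (t * (q i - p i) + p i).
have D : is_derive (0:R) 1 (\sum_(i < d) h i)
  (\sum_(i < d) ((q i - p i) * L i + gam i * (derive1 psi (p i) * (q i - p i))
      - c * ((p i)^-1 * (q i - p i)))).
  apply: is_derive_sum => i.
  apply: derB; first apply: derD.
  - by apply: derMr; apply: derlin.
  - by apply: derMl; apply: dercomp; apply: dpsi; apply: pos.
  - by apply: derMl; apply: derln; apply: pos.
have hE : forall t, (\sum_(i < d) h i) t = Fobj c gam L psi (fun i => t * (q i - p i) + p i).
  move=> t; rewrite fct_sumE /Fobj /inner /phi_reg /phi_log mulr_sumr -sumrN -!big_split /=.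
  by apply: eq_bigr => i _.
have key : 0 <= 'D_1 (\sum_(i < d) h i) 0.
  apply: right_le; first exact: ex_derive.
  move=> t t0 t1; rewrite mulr0 addr0 !hE.
  have -> : (fun i => 0 * (q i - p i) + p i) = p by apply/funext => i; rewrite mul0r add0r.
  apply: pmin.
  have -> : (fun i => t * (q i - p i) + p i) = (fun i => t * q i + (1 - t) * p i).
    by apply/funext => i; ring.
  by apply: cvx => //; rewrite (ltW t0) t1.
rewrite (@derive_val _ _ _ _ _ _ _ D) in key.
apply: (le_trans key); rewrite le_eqVlt; apply/orP; left; apply/eqP.
apply: eq_bigr => i _; ring.
Qed.
Lemma pt1 (R : realType) (u : R) : 0 < u ->
  (u - 1) ^+ 2 <= 2 * ((u - 1) ^+ 2 / u) + 4 * ((u - 1) ^+ 2 / u) ^+ 2.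
Proof.
move=> u0.
set w := (u - 1) ^+ 2 / u.
have w0 : 0 <= w by rewrite /w divr_ge0 // ?sqr_ge0 // ltW.
have hw : (u - 1) ^+ 2 = w * u by rewrite /w divfK // gt_eqF.
rewrite hw.
have : u * w <= 2 * w + 4 * w ^+ 2.
  have key : u * u <= 2 * u + 4 * (u - 1) ^+ 2 by nra.
  rewrite hw in key.
  nra.
by rewrite mulrC.
Qed.

Lemma pt2 (R : realType) (x y : R) : 0 < x -> 0 < y -> ~ (x / 2 <= y <= 2 * x) ->
  1 / 4 < (y - x) ^+ 2 / (x * y).
Proof.
move=> x0 y0 H.
have xy0 : 0 < x * y by rewrite mulr_gt0.
rewrite ltr_pdivlMr // .
have : y < x / 2 \/ 2 * x < y.
  case: (ltP y (x / 2)) => h1; first by left.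
  case: (ltP (2 * x) y) => h2; first by right.
  by exfalso; apply: H; rewrite h1 h2.
case=> h; nra.
Qed.
Theorem lemma29 (R : realType) (d : nat) (Clog : R)
  (gam gam' L L' : 'I_d -> R) (psi : R -> R) (Omega : set ('I_d -> R))
  (x y : 'I_d -> R) :
  0 < Clog ->
  (forall i, 0 < gam i) -> (forall i, 0 < gam' i) ->
  (forall i, gam i <= gam' i) ->
  (forall i, 0 < L i) -> (forall i, 0 < L' i) ->
  twice_diff_pos psi -> convex_pos psi ->
  (forall a z : R, 0 < a -> a / 2 <= z <= 2 * a ->
     derive1 (derive1 psi) a / 4 <= derive1 (derive1 psi) z /\
     derive1 (derive1 psi) z <= 4 * derive1 (derive1 psi) a) ->
  (forall p, Omega p -> forall i, 0 < p i) ->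
  convex_set_d Omega ->
  is_argmin (Fobj Clog gam L psi) Omega x ->
  is_argmin (Fobj Clog gam' L' psi) Omega y ->
  Num.max 9 (Num.max (32 * \sum_(i < d) (L' i - L i) ^+ 2 * x i ^+ 2)
                     (32 * \sum_(i < d) (gam' i - gam i) ^+ 2
                              * (derive1 psi (x i)) ^+ 2 * x i ^+ 2)) <= Clog ->
  forall i, x i / 2 <= y i <= 2 * x i.
Proof.
move=> c0 g0 g'0 gg' L0 L'0 td cvx _ pos cvxO xmin ymin.
rewrite !ge_max => /andP[c9 /andP[cA cB]] j.
have dpsi : forall z, 0 < z -> derivable psi z 1 by move=> z /td [].
have [Ox _] := xmin; have [Oy _] := ymin.
have x0 := pos _ Ox; have y0 := pos _ Oy.
have H1 := @foc R d Clog gam L psi Omega x y dpsi pos cvxO xmin Oy.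
have H2 := @foc R d Clog gam' L' psi Omega y x dpsi pos cvxO ymin Ox.
have mono : forall i, 0 <= (derive1 psi (y i) - derive1 psi (x i)) * (y i - x i).
  move=> i.
  have t1 := @tangent R psi (x i) (y i) cvx (dpsi _ (x0 i)) (x0 i) (y0 i).
  have t2 := @tangent R psi (y i) (x i) cvx (dpsi _ (y0 i)) (y0 i) (x0 i).
  nra.
pose v i := (y i - x i) / x i.
pose t i := (y i - x i) ^+ 2 / (x i * y i).
pose a i := ((L' i - L i) + (gam' i - gam i) * derive1 psi (x i)) * x i.
pose S := \sum_(i < d) t i.
have t0 : forall i, 0 <= t i.
  by move=> i; rewrite /t divr_ge0 ?sqr_ge0 // mulr_ge0 // ltW.
have S0 : 0 <= S by apply: sumr_ge0 => i _.
have tS : forall i, t i <= S.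
  move=> i; rewrite /S (bigD1 i) //= lerDl; apply: sumr_ge0 => k _; exact: t0.
have Hsum : 0 <= \sum_(i < d) (- (a i * v i) - Clog * t i).
  have := addr_ge0 H1 H2; rewrite -big_split /=.
  move=> h; apply: (le_trans h); apply: ler_sum => i _.
  have xi0 := x0 i; have yi0 := y0 i.
  have E : (L i + gam i * derive1 psi (x i) - Clog / x i) * (y i - x i) +
     (L' i + gam' i * derive1 psi (y i) - Clog / y i) * (x i - y i)
     = - (a i * v i) - Clog * t i
       - gam' i * ((derive1 psi (y i) - derive1 psi (x i)) * (y i - x i)).
    rewrite /a /v /t; field.
    by rewrite !gt_eqF.
  rewrite E lerBlDr lerDl; apply: mulr_ge0; [exact: ltW | exact: mono].
have A8 : \sum_(i < d) a i ^+ 2 <= Clog / 8.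
  have : \sum_(i < d) a i ^+ 2 <= 2 * (\sum_(i < d) (L' i - L i) ^+ 2 * x i ^+ 2)
       + 2 * (\sum_(i < d) (gam' i - gam i) ^+ 2 * derive1 psi (x i) ^+ 2 * x i ^+ 2).
    rewrite !mulr_sumr -big_split; apply: ler_sum => i _; rewrite /a.
    set P := (L' i - L i) * x i.
    set Q := (gam' i - gam i) * derive1 psi (x i) * x i.
    have e1 : ((L' i - L i) + (gam' i - gam i) * derive1 psi (x i)) * x i = P + Q
      by rewrite /P /Q; ring.
    have e2 : (L' i - L i) ^+ 2 * x i ^+ 2 = P ^+ 2 by rewrite /P; ring.
    have e3 : (gam' i - gam i) ^+ 2 * derive1 psi (x i) ^+ 2 * x i ^+ 2 = Q ^+ 2
      by rewrite /Q; ring.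
    rewrite e1 e2 e3.
    have h1 := sqr_ge0 (P - Q).
    have h2 : (P + Q) ^+ 2 = 2 * P ^+ 2 + 2 * Q ^+ 2 - (P - Q) ^+ 2 by ring.
    by rewrite h2 lerBlDl lerDr.
  move=> h; lra.
have Hv : forall i, v i ^+ 2 <= 2 * t i + 4 * t i ^+ 2.
  move=> i; have xi0 := x0 i; have yi0 := y0 i.
  have u0 : 0 < y i / x i by rewrite divr_gt0.
  have := @pt1 R _ u0.
  have -> : v i = y i / x i - 1 by rewrite /v; field; rewrite gt_eqF.
  have -> : t i = (y i / x i - 1) ^+ 2 / (y i / x i).
    by rewrite /t; field; rewrite !gt_eqF.
  done.
have Hcross : forall i, - (a i * v i) * (16 * S) <= 64 * S ^+ 2 * a i ^+ 2 + v i ^+ 2.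
  move=> i; have := sqr_ge0 (8 * S * a i + v i); nra.
set Q := \sum_(i < d) - (a i * v i).
have HQ : Clog * S <= Q.
  move: Hsum; rewrite sumrB -mulr_sumr subr_ge0 //.
have HQ2 : Q * (16 * S) <= 64 * S ^+ 2 * (\sum_(i < d) a i ^+ 2) + \sum_(i < d) v i ^+ 2.
  rewrite /Q mulr_suml [64 * _ * _]mulr_sumr -big_split /=; apply: ler_sum => i _; exact: Hcross.
have Hv2 : \sum_(i < d) v i ^+ 2 <= 2 * S + 4 * (S * S).
  apply: (le_trans (ler_sum _ (fun i _ => Hv i))).
  rewrite big_split /= -!mulr_sumr lerD2l ler_pM2l // mulr_suml.
  apply: ler_sum => i _; rewrite expr2; apply: ler_wpM2l; [exact: t0 | exact: tS].
case: (pselect (x j / 2 <= y j <= 2 * x j)) => // Hn; exfalso.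
have tj := @pt2 R _ _ (x0 j) (y0 j) Hn.
have S4 : 1 / 4 < S by apply: (lt_le_trans tj); exact: tS.
have SA : S ^+ 2 * (\sum_(i < d) a i ^+ 2) <= S ^+ 2 * (Clog / 8).
  by apply: ler_wpM2l => //; rewrite sqr_ge0.
have : Clog * S * (16 * S) <= Q * (16 * S).
  by apply: ler_wpM2r => //; rewrite mulr_ge0.
nra.
Qed.
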